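(* Suppose that $A,B\in\mathbb{S}^d$ and $K^\star\in\mathbb{S}^d_{\le1}$ satisfy $t_{\mathrm{mix}}(A)>4\cdot t_{\mathrm{mix}}(C(K^\star))$, where $C(K^\star):=(1-\|K^\star\|_{1\to1})A+BK^\star$. Then $\|K^\star\|_{1\to1}>1/(96\cdot t_{\mathrm{mix}}(C(K^\star)))$.
   Context: $\mathbb{S}^d$ is the set of $d\times d$ column-stochastic matrices, $\mathbb{S}^d_a:=\{aM:M\in\mathbb{S}^d\}$ and $\mathbb{S}^d_{\le1}:=\bigcup_{a\in[0,1]}\mathbb{S}^d_a$. $\|M\|_{1\to1}:=\sup_{\|x\|_1=1}\|Mx\|_1$. For $X\in\mathbb{S}^d$ with unique stationary distribution $\pi$, $D_X(t):=\sup_{p\in\Delta^d}\|X^tp-\pi\|_1$ and $t_{\mathrm{mix}}(X):=\min\{t\in\mathbb{N}:D_X(t)\le1/4\}$; if $X$ has no unique stationary distribution, $t_{\mathrm{mix}}(X):=\infty$. *)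

(* Defs.v *)
From HB Require Import structures.
From mathcomp Require Import all_boot all_order all_algebra.
From mathcomp Require Import all_classical all_reals.
From mathcomp Require Import ereal.
Set Implicit Arguments. Unset Strict Implicit. Unset Printing Implicit Defensive.
Import Order.TTheory GRing.Theory Num.Theory.
Local Open Scope ring_scope.
Local Open Scope classical_set_scope.

Section Defs.
Variables (R : realType) (d : nat).

Definition norm1 (x : 'cV[R]_d) : R := \sum_i `|x i 0|.

Definition col_stoch (M : 'M[R]_d) : Prop :=
  (forall i j, 0 <= M i j) /\ (forall j, \sum_i M i j = 1).

Definition sub_col_stoch (K : 'M[R]_d) : Prop :=
  exists a : R, 0 <= a <= 1 /\ exists M, col_stoch M /\ K = a *: M.

Definition opnorm11 (M : 'M[R]_d) : R :=
  sup [set norm1 (M *m x) | x in [set x : 'cV[R]_d | norm1 x = 1]].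

Definition simplex : set 'cV[R]_d :=
  [set p | (forall i, 0 <= p i 0) /\ \sum_i p i 0 = 1].

Definition unique_stationary (X : 'M[R]_d) (pi : 'cV[R]_d) : Prop :=
  simplex pi /\ X *m pi = pi /\
  forall q, simplex q -> X *m q = q -> q = pi.

Definition Dist (X : 'M[R]_d) (pi : 'cV[R]_d) (t : nat) : R :=
  sup [set norm1 (iter t (fun v => X *m v) p - pi) | p in simplex].

(* t_mix(X) in N u {+oo}: min {t | D_X(t) <= 1/4} if X has a unique
   stationary distribution (and +oo if that set is empty), +oo otherwise. *)
Definition tmix (X : 'M[R]_d) : \bar R :=
  ereal_inf [set ((t%:R : R)%:E) | t in
    [set t : nat | exists pi, unique_stationary X pi /\ Dist X pi t <= 4^-1]].

Definition Cmat (A B K : 'M[R]_d) : 'M[R]_d :=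
  (1 - opnorm11 K) *: A + B *m K.

End Defs.

(* Main.v *)
Require Import Defs.
From HB Require Import structures.
From mathcomp Require Import all_boot all_order all_algebra.
From mathcomp Require Import all_classical all_reals.
From mathcomp Require Import ereal.
From mathcomp Require Import ring lra.
Import Order.TTheory GRing.Theory Num.Theory.
Local Open Scope ring_scope.
Local Open Scope classical_set_scope.

Section Helpers.
Variables (R : realType) (d : nat).
Implicit Types (x y : 'cV[R]_d) (X : 'M[R]_d).

Definition vsum x : R := \sum_i x i 0.

Lemma norm1_ge0 x : 0 <= norm1 x.
Proof. by apply: sumr_ge0 => i _; exact: normr_ge0. Qed.

Lemma norm1D x y : norm1 (x + y) <= norm1 x + norm1 y.
Proof.
rewrite /norm1 -big_split /=; apply: ler_sum => i _; rewrite mxE; exact: ler_normD.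
Qed.

Lemma norm1Z (c : R) x : norm1 (c *: x) = `|c| * norm1 x.
Proof.
rewrite /norm1 mulr_sumr; apply: eq_bigr => i _; by rewrite mxE normrM.
Qed.

Lemma norm1N x : norm1 (- x) = norm1 x.
Proof. by rewrite -scaleN1r norm1Z normrN normr1 mul1r. Qed.

Lemma norm1B x y : norm1 (x - y) = norm1 (y - x).
Proof. by rewrite -norm1N opprB. Qed.

Lemma norm1_eq0 x : norm1 x = 0 -> x = 0.
Proof.
move=> h; apply/matrixP => i j; rewrite ord1 mxE.
have := @psumr_eq0P _ _ predT (fun i => `|x i 0|) (fun i _ => normr_ge0 _) h i isT.
by move/eqP; rewrite normr_eq0 => /eqP.
Qed.

Lemma stoch_norm X x : col_stoch X -> norm1 (X *m x) <= norm1 x.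
Proof.
case=> Hp Hs; rewrite /norm1.
have -> : \sum_i `|x i 0| = \sum_i \sum_j X j i * `|x i 0|.
  by apply: eq_bigr => i _; rewrite -mulr_suml Hs mul1r.
rewrite exchange_big /=; apply: ler_sum => i _; rewrite mxE.
apply: le_trans (ler_norm_sum _ _ _) _; apply: ler_sum => j _.
by rewrite normrM ger0_norm.
Qed.

Lemma stoch_sum X x : col_stoch X -> vsum (X *m x) = vsum x.
Proof.
case=> Hp Hs; rewrite /vsum.
under eq_bigr => i _ do rewrite mxE.
rewrite exchange_big /=; apply: eq_bigr => j _.
by rewrite -mulr_suml Hs mul1r.
Qed.

Lemma vsumD x y : vsum (x + y) = vsum x + vsum y.
Proof. by rewrite /vsum -big_split; apply: eq_bigr => i _; rewrite mxE. Qed.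

Lemma vsumZ c x : vsum (c *: x) = c * vsum x.
Proof. by rewrite /vsum mulr_sumr; apply: eq_bigr => i _; rewrite mxE. Qed.

Lemma vsumN x : vsum (- x) = - vsum x.
Proof. by rewrite -scaleN1r vsumZ mulN1r. Qed.

Lemma vsumB x y : vsum (x - y) = vsum x - vsum y.
Proof. by rewrite vsumD vsumN. Qed.

Lemma simplex_norm (p : 'cV[R]_d) : simplex p -> norm1 p = 1.
Proof.
case=> H0 H1; rewrite -H1 /norm1; apply: eq_bigr => i _; exact: ger0_norm.
Qed.

Definition mpow X n : 'M[R]_d := iter n (mulmx X) 1%:M.

Lemma iter_mpow X n x : iter n (fun v => X *m v) x = mpow X n *m x.
Proof.
elim: n => [|n IH] /=; first by rewrite mul1mx.
by rewrite IH mulmxA.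
Qed.

Lemma mpowS X n : mpow X n.+1 = X *m mpow X n.
Proof. by []. Qed.

Lemma mpowD X m n : mpow X (m + n) = mpow X m *m mpow X n.
Proof.
elim: m => [|m IH]; first by rewrite /= mul1mx.
by rewrite addSn !mpowS IH mulmxA.
Qed.

Lemma mpow_norm X n x : col_stoch X -> norm1 (mpow X n *m x) <= norm1 x.
Proof.
move=> HX; elim: n => [|n IH]; first by rewrite /= mul1mx.
rewrite mpowS -mulmxA; exact: le_trans (stoch_norm _ _ HX) IH.
Qed.

Lemma mpow_sum X n x : col_stoch X -> vsum (mpow X n *m x) = vsum x.
Proof.
move=> HX; elim: n => [|n IH]; first by rewrite /= mul1mx.
by rewrite mpowS -mulmxA stoch_sum.
Qed.

Lemma mpow_fix X n x : X *m x = x -> mpow X n *m x = x.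
Proof.
move=> h; elim: n => [|n IH]; first by rewrite /= mul1mx.
by rewrite mpowS -mulmxA IH.
Qed.


Definition absv x : 'cV[R]_d := \col_i `|x i 0|.

Lemma vsum_absv x : vsum (absv x) = norm1 x.
Proof. by rewrite /vsum /norm1; apply: eq_bigr => i _; rewrite mxE. Qed.

Lemma contr_of_dist (P : 'M[R]_d) (pi : 'cV[R]_d) (r : R) :
  (forall p, simplex p -> norm1 (P *m p - pi) <= r) ->
  forall x, vsum x = 0 -> norm1 (P *m x) <= r * norm1 x.
Proof.
move=> Hd x Hx.
have [n0|nz] := eqVneq (norm1 x) 0.
  by rewrite n0 (norm1_eq0 _ n0) mulmx0 mulr0 /norm1 big1 // => i _; rewrite mxE normr0.
set n := norm1 x in nz *.
have npos : 0 < n by rewrite lt0r nz norm1_ge0.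
set p := n^-1 *: (absv x + x).
set q := n^-1 *: (absv x - x).
have Hp : simplex p.
  split.
    move=> i; rewrite !mxE; apply: mulr_ge0; first by rewrite invr_ge0 ltW.
    by have := ler_norm (- x i 0); rewrite normrN => h; lra.
  by rewrite -/(vsum p) vsumZ vsumD Hx addr0 vsum_absv mulVf.
have Hq : simplex q.
  split.
    move=> i; rewrite !mxE; apply: mulr_ge0; first by rewrite invr_ge0 ltW.
    by have := ler_norm (x i 0); lra.
  by rewrite -/(vsum q) vsumZ vsumB Hx subr0 vsum_absv mulVf.
have -> : x = (n / 2) *: (p - q).
  apply/matrixP => i j; rewrite !mxE ord1; field.
  by rewrite nz.
rewrite -scalemxAr norm1Z ger0_norm; last by rewrite divr_ge0 // ltW.
have -> : P *m (p - q) = (P *m p - pi) - (P *m q - pi).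
  by rewrite mulmxBr opprB addrA subrK.
have h3 := norm1D (P *m p - pi) (- (P *m q - pi)).
rewrite norm1N in h3.
have h1 := Hd _ Hp; have h2 := Hd _ Hq.
have h4 : norm1 (P *m p - pi - (P *m q - pi)) <= r + r by lra.
have h5 := ler_wpM2l (ltW (divr_gt0 npos (ltr0Sn _ 1))) h4.
apply: le_trans h5 _; rewrite le_eqVlt; apply/orP; left; by apply/eqP; field.
Qed.

Lemma norm1_delta (i0 : 'I_d) : norm1 (delta_mx i0 0 : 'cV[R]_d) = 1.
Proof.
rewrite /norm1 (bigD1 i0) //= big1 ?addr0; first by rewrite mxE !eqxx normr1.
by move=> i /negbTE hi; rewrite mxE hi normr0.
Qed.

Lemma opnorm_sc (M : 'M[R]_d) (a : R) (i0 : 'I_d) :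
  col_stoch M -> 0 <= a -> opnorm11 (a *: M) = a.
Proof.
move=> HM a0.
have ub : ubound [set norm1 ((a *: M) *m x) | x in [set x : 'cV[R]_d | norm1 x = 1]] a.
  move=> _ [x Hx <-]; rewrite -scalemxAl norm1Z ger0_norm //.
  rewrite -[X in _ <= X]mulr1 -Hx; apply: ler_wpM2l => //; exact: stoch_norm.
have inS : [set norm1 ((a *: M) *m x) | x in [set x : 'cV[R]_d | norm1 x = 1]] a.
  exists (delta_mx i0 0); first exact: norm1_delta.
  rewrite -scalemxAl norm1Z ger0_norm // -colE /norm1.
  case: HM => Hp Hs; rewrite -[X in _ = X]mulr1 -(Hs i0); congr (_ * _).
  by apply: eq_bigr => i _; rewrite mxE ger0_norm.
apply/le_anti/andP; split; first by apply: ge_sup => //; exists a.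
apply: ub_le_sup => //; by exists a.
Qed.

Lemma stoch_mul X Y : col_stoch X -> col_stoch Y -> col_stoch (X *m Y).
Proof.
case=> Xp Xs [Yp Ys]; split.
  move=> i j; rewrite mxE; apply: sumr_ge0 => k _; exact: mulr_ge0.
move=> j; under eq_bigr => i _ do rewrite mxE.
rewrite exchange_big /= -(Ys j); apply: eq_bigr => k _.
by rewrite -mulr_suml Xs mul1r.
Qed.

Lemma stoch_conv X Y (a : R) : col_stoch X -> col_stoch Y -> 0 <= a <= 1 ->
  col_stoch ((1 - a) *: X + a *: Y).
Proof.
case=> Xp Xs [Yp Ys] /andP[a0 a1]; split.
  move=> i j; rewrite !mxE; apply: addr_ge0; apply: mulr_ge0 => //; lra.
move=> j; under eq_bigr => i _ do rewrite !mxE.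
by rewrite big_split /= -!mulr_sumr Xs Ys !mulr1 subrK.
Qed.

Lemma perturb X Y (e : R) : 0 <= e -> col_stoch X -> col_stoch Y ->
  (forall y, norm1 (X *m y - Y *m y) <= e * norm1 y) ->
  forall n x, norm1 (mpow X n *m x - mpow Y n *m x) <= n%:R * e * norm1 x.
Proof.
move=> e0 HX HY He n x; elim: n => [|n IH].
  by rewrite /= subrr mul0r mul0r /norm1 big1 // => i _; rewrite mxE normr0.
rewrite !mpowS -!mulmxA.
have -> : X *m (mpow X n *m x) - Y *m (mpow Y n *m x) =
   X *m (mpow X n *m x - mpow Y n *m x) + (X *m (mpow Y n *m x) - Y *m (mpow Y n *m x)).
  by rewrite mulmxBr addrA subrK.
apply: le_trans (norm1D _ _) _.
have h1 := le_trans (stoch_norm _ _ HX) IH.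
have h2 := He (mpow Y n *m x).
have h3 := mpow_norm Y n x HY.
have h4 := ler_wpM2l e0 h3.
rewrite -natr1 mulrDl mulrDl mul1r; lra.
Qed.


Lemma eq_of_le_sum y (z : 'cV[R]_d) : (forall i, y i 0 <= z i 0) -> vsum y = vsum z -> y = z.
Proof.
move=> Hle Hs; apply/matrixP => i j; rewrite ord1.
have h : \sum_(k < d) (z k 0 - y k 0) = 0.
  by rewrite sumrB -/(vsum z) -/(vsum y) Hs subrr.
have hp : forall k : 'I_d, predT k -> 0 <= z k 0 - y k 0.
  by move=> k _; rewrite subr_ge0.
have := @psumr_eq0P _ _ predT (fun k => z k 0 - y k 0) hp h i isT.
by move/eqP; rewrite subr_eq0 => /eqP.
Qed.

Lemma contr_zero (c : R) x : c < 1 -> norm1 x <= c * norm1 x -> x = 0.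
Proof.
move=> c1 h; apply: norm1_eq0; have := norm1_ge0 x => h0.
nra.
Qed.

Lemma stationary_of_contr A s (c : R) (i0 : 'I_d) :
  col_stoch A -> 0 <= c -> c < 1 ->
  (forall x, vsum x = 0 -> norm1 (mpow A s *m x) <= c * norm1 x) ->
  exists pi, unique_stationary A pi /\ Dist A pi s <= 2 * c.
Proof.
move=> HA c0 c1 Hc.
have [v v0 Av] : exists2 v : 'cV[R]_d, v != 0 & A *m v = v.
  have hdet : \det (A - 1%:M) == 0.
    apply/det0P; exists (const_mx 1 : 'rV[R]_d).
      apply/negP => /eqP /matrixP /(_ 0 i0); rewrite !mxE => /eqP.
      by rewrite oner_eq0.
    case: HA => Hp Hs.
    apply/matrixP => i j; rewrite mulmxBr mulmx1 !mxE.
    under eq_bigr => k _ do rewrite mxE mul1r.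
    by rewrite Hs subrr.
  rewrite -det_tr in hdet.
  case/det0P: hdet => w w0 hw.
  exists w^T.
    apply/negP => /eqP h; move/negP: w0; apply; apply/eqP.
    by rewrite -(trmxK w) h trmx0.
  have : (w *m (A - 1%:M)^T)^T = 0 by rewrite hw trmx0.
  rewrite trmx_mul trmxK mulmxBl mul1mx => /eqP; rewrite subr_eq0 => /eqP //.
have Nv : 0 < norm1 v.
  rewrite lt0r norm1_ge0 andbT; apply/negP => /eqP h.
  by move/negP: v0; apply; rewrite (norm1_eq0 _ h).
have Aabs : A *m absv v = absv v.
  symmetry; apply: eq_of_le_sum.
    move=> i; rewrite !mxE -{1}Av mxE.
    apply: le_trans (ler_norm_sum _ _ _) _; apply: ler_sum => j _.
    case: HA => Hp _; by rewrite normrM (ger0_norm (Hp _ _)) mxE.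
  by rewrite stoch_sum.
set u := (norm1 v)^-1 *: absv v.
have Hu : simplex u.
  split.
    by move=> i; rewrite !mxE; apply: mulr_ge0; [rewrite invr_ge0 ltW | exact: normr_ge0].
  by rewrite -/(vsum u) vsumZ vsum_absv mulVf // lt0r_neq0.
have Au : A *m u = u by rewrite -scalemxAr Aabs.
have fixd : forall q, A *m q = q -> mpow A s *m (q - u) = q - u.
  by move=> q hq; rewrite mulmxBr !mpow_fix.
exists u; split.
  split; first exact: Hu.
  split; first exact: Au.
  move=> q Hq Aq; apply/eqP; rewrite -subr_eq0; apply/eqP.
  apply: (contr_zero _ _ c1); rewrite -{1}(fixd q Aq); apply: Hc.
  by rewrite vsumB; case: Hq => _ h1; case: Hu => _ h2; rewrite /vsum h1 h2 subrr.
apply: ge_sup.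
  by exists (norm1 (iter s (fun v => A *m v) u - u)); exists u.
move=> _ [p Hp <-]; rewrite iter_mpow -(mpow_fix A s u Au) -mulmxBr.
apply: le_trans (Hc _ _) _.
  by rewrite vsumB; case: Hp => _ h1; case: Hu => _ h2; rewrite /vsum h1 h2 subrr.
have := norm1D p (- u); rewrite norm1N (simplex_norm _ Hp) (simplex_norm _ Hu) => h.
have := ler_wpM2l c0 h; lra.
Qed.

End Helpers.
Arguments vsum {R d}.
Arguments norm1_ge0 {R d}.
Arguments norm1D {R d}.
Arguments norm1Z {R d}.
Arguments norm1N {R d}.
Arguments norm1B {R d}.
Arguments norm1_eq0 {R d}.
Arguments stoch_norm {R d}.
Arguments stoch_sum {R d}.
Arguments vsumD {R d}.
Arguments vsumZ {R d}.
Arguments vsumN {R d}.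
Arguments vsumB {R d}.
Arguments simplex_norm {R d}.
Arguments mpow {R d}.
Arguments iter_mpow {R d}.
Arguments mpowS {R d}.
Arguments mpowD {R d}.
Arguments mpow_norm {R d}.
Arguments mpow_sum {R d}.
Arguments mpow_fix {R d}.
Arguments absv {R d}.
Arguments vsum_absv {R d}.
Arguments contr_of_dist {R d}.
Arguments norm1_delta {R d}.
Arguments opnorm_sc {R d}.
Arguments stoch_mul {R d}.
Arguments stoch_conv {R d}.
Arguments perturb {R d}.
Arguments eq_of_le_sum {R d}.
Arguments contr_zero {R d}.
Arguments stationary_of_contr {R d}.

Theorem lemma6 (R : realType) (d : nat) (A B K : 'M[R]_d) :
  col_stoch A -> col_stoch B -> sub_col_stoch K ->
  (4%:E * tmix (Cmat A B K) < tmix A)%E ->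
  1 / (96 * fine (tmix (Cmat A B K))) < opnorm11 K.
Proof.
move=> HA HB [a [/andP[a0 a1] [M [HM ->]]]] Hlt.
set C := Cmat A B (a *: M) in Hlt *.
set S := [set t : nat | exists pi, unique_stationary C pi /\ Dist C pi t <= 4^-1].
have [hS|hS] := pselect (exists t, S t); last first.
  have Hinf : tmix C = +oo%E.
    apply/le_anti/andP; split; first exact: leey.
    apply: le_ereal_inf_tmp => y [t Ht _]; exfalso; apply: hS; by exists t.
  by move: Hlt; rewrite Hinf mulry gtr0_sg // mul1e ltNge leey.
have exP : exists n, (fun t => `[< S t >]) n by case: hS => t Ht; exists t; apply/asboolP.
case: (ex_minnP exP) => t0 /asboolP HS0 Hmin.
have Htmix : tmix C = (t0%:R)%:E.
  apply/le_anti/andP; split.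
    by apply: ereal_inf_lbound; exists t0.
  apply: le_ereal_inf_tmp => _ [t Ht <-]; rewrite lee_fin ler_nat; apply: Hmin.
  exact/asboolP.
case: HS0 => pi [[Hpi [HCpi Huniq]] HD].
have [i0 _|h0] := pickP (@predT 'I_d); last first.
  case: Hpi => _ H1; move: H1; rewrite big1 => [|i _]; last by have := h0 i.
  by move/eqP; rewrite eq_sym oner_eq0.
have Hop : opnorm11 (a *: M) = a := opnorm_sc M a i0 HM a0.
have HCdef : C = (1 - a) *: A + a *: (B *m M).
  by rewrite /C /Cmat Hop scalemxAr.
have HC : col_stoch C.
  by rewrite HCdef; apply: stoch_conv => //; [exact: stoch_mul | rewrite a0 a1].
rewrite ltNge; apply/negP => Hle.
rewrite Htmix /= Hop in Hle.
have Hdist : forall p, simplex p -> norm1 (mpow C t0 *m p - pi) <= 4^-1.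
  move=> p Hp; apply: le_trans HD.
  have ub : has_ubound [set norm1 (iter t0 (fun v => C *m v) q - pi) | q in simplex (d:=d)].
    exists 2 => _ [q Hq <-]; rewrite iter_mpow.
    have := norm1D (mpow C t0 *m q) (- pi); rewrite norm1N (simplex_norm _ Hpi).
    have := mpow_norm C t0 q HC; rewrite (simplex_norm _ Hq); lra.
  apply: ub_le_sup => //; exists p => //; by rewrite iter_mpow.
have HcC := contr_of_dist _ _ _ Hdist.
have Hk : forall k x, vsum x = 0 -> norm1 (mpow C (k * t0) *m x) <= (4^-1) ^+ k * norm1 x.
  elim=> [|k IH] x hx; first by rewrite mul0n /= mul1mx expr0 mul1r.
  rewrite mulSn mpowD -mulmxA.
  apply: le_trans (HcC _ _) _; first by rewrite mpow_sum.
  rewrite exprS -mulrA; apply: ler_wpM2l => //; exact: IH.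
have HAC : forall y, norm1 (A *m y - C *m y) <= (2 * a) * norm1 y.
  move=> y.
  have -> : A *m y - C *m y = a *: (A *m y - (B *m M) *m y).
    rewrite HCdef mulmxDl -!scalemxAl.
    move: (A *m y) ((B *m M) *m y) => u w.
    by apply/matrixP => i j; rewrite !mxE; ring.
  rewrite norm1Z ger0_norm //.
  have := norm1D (A *m y) (- ((B *m M) *m y)); rewrite norm1N => h.
  have h1 := stoch_norm _ y HA; have h2 := stoch_norm _ y (stoch_mul _ _ HB HM).
  have h3 : norm1 (A *m y - (B *m M) *m y) <= 2 * norm1 y by lra.
  have := ler_wpM2l a0 h3; rewrite mulrA (mulrC a 2); lra.
have Hpert := perturb _ _ _ (mulr_ge0 (ler0n _ 2) a0) HA HC HAC.
set s := (4 * t0)%N.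
set c := (4^-1) ^+ 4 + s%:R * (2 * a).
have Hsmall : s%:R * (2 * a) <= 12^-1.
  rewrite /s natrM.
  have [t00|tpos] := eqVneq t0 0%N; first by rewrite t00 mulr0 mul0r; lra.
  have T0 : (0 : R) < t0%:R by rewrite ltr0n lt0n.
  move: Hle; rewrite ler_pdivlMr ?mulr_gt0 // => h; nra.
have c0 : 0 <= c.
  by apply: addr_ge0; [apply: exprn_ge0 | apply: mulr_ge0 => //; apply: mulr_ge0].
have c18 : c <= 8^-1 by rewrite /c; rewrite !exprS expr0; lra.
have HcA : forall x, vsum x = 0 -> norm1 (mpow A s *m x) <= c * norm1 x.
  move=> x hx.
  have -> : mpow A s *m x = mpow C s *m x + (mpow A s *m x - mpow C s *m x).
    by rewrite addrC subrK.
  apply: le_trans (norm1D _ _) _.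
  have h1 : norm1 (mpow C s *m x) <= (4^-1) ^+ 4 * norm1 x.
    exact: Hk.
  have h2 := Hpert s x.
  rewrite /c mulrDl; lra.
have c1 : c < 1 by lra.
have [piA [HuA HDA]] := stationary_of_contr A s c i0 HA c0 c1 HcA.
have HtA : (tmix A <= (s%:R)%:E)%E.
  apply: ereal_inf_lbound; exists s => //; exists piA; split => //.
  apply: le_trans HDA _; lra.
move: Hlt; rewrite Htmix -EFinM => Hlt.
by have := lt_le_trans Hlt HtA; rewrite lte_fin /s natrM ltxx.
Qed.
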